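(* Let $(T,X)$ be a compact flow (with $T$ a Hausdorff topological group and $X$ a compact Hausdorff space) and let $S$ be a thick subsemigroup of $T$. If $(T,X)$ is Lyapunov $S$-stable, then $(T,X)$ is an a.p. flow.
   Context: $\mathscr U_X$ is the uniformity of $X$; $\varepsilon[A]=\{y:\exists a\in A,(a,y)\in\varepsilon\}$. $S\subseteq T$ is (right) thick if for every compact $K\subseteq T$ there is $t$ with $Kt\subseteq S$; $A\subseteq T$ is (right) syndetic if there is compact $K$ with $Kt\cap A\neq\emptyset$ for all $t$. The flow is Lyapunov $S$-stable if for every $\varepsilon\in\mathscr U_X$ and every $x\in X$ there is $\delta\in\mathscr U_X$ with $t(\delta[x])\subseteq\varepsilon[tx]$ for all $t\in S$. A flow is an a.p. flow if for every $\alpha\in\mathscr U_X$ there is a syndetic $A\subseteq T$ with $Ax\subseteq\alpha[x]$ for all $x\in X$. *)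

(* Defs.v *)
From HB Require Import structures.
From mathcomp Require Import all_boot all_order all_algebra.
From mathcomp Require Import all_classical all_reals all_analysis.
Set Implicit Arguments. Unset Strict Implicit. Unset Printing Implicit Defensive.
Local Open Scope classical_set_scope.

Definition is_topological_group (T : topologicalType)
  (mul : T -> T -> T) (inv : T -> T) (e : T) : Prop :=
  [/\ (forall a b c, mul a (mul b c) = mul (mul a b) c),
      (forall a, mul e a = a /\ mul a e = a),
      (forall a, mul (inv a) a = e /\ mul a (inv a) = e),
      continuous (fun p : T * T => mul p.1 p.2) &
      continuous inv].

Definition is_flow (T X : topologicalType)
  (mul : T -> T -> T) (e : T) (act : T -> X -> X) : Prop :=
  [/\ (forall x, act e x = x),
      (forall s t x, act (mul s t) x = act s (act t x)) &
      continuous (fun p : T * X => act p.1 p.2)].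

Definition subsemigroup (T : Type) (mul : T -> T -> T) (S : set T) : Prop :=
  forall s t, S s -> S t -> S (mul s t).

Definition thick (T : topologicalType) (mul : T -> T -> T) (S : set T) : Prop :=
  forall K : set T, compact K -> exists t, forall k, K k -> S (mul k t).

Definition syndetic (T : topologicalType) (mul : T -> T -> T) (A : set T) : Prop :=
  exists K : set T, compact K /\ forall t, exists k, K k /\ A (mul k t).

Definition lyapunov_stable (T : Type) (X : uniformType)
  (act : T -> X -> X) (S : set T) : Prop :=
  forall eps : set (X * X), entourage eps -> forall x : X,
    exists2 delta : set (X * X), entourage delta &
      forall t, S t -> forall y, delta (x, y) -> eps (act t x, act t y).

Definition ap_flow (T : topologicalType) (X : uniformType)
  (mul : T -> T -> T) (act : T -> X -> X) : Prop :=
  forall alpha : set (X * X), entourage alpha ->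
    exists A : set T, syndetic mul A /\
      forall a x, A a -> alpha (x, act a x).

(* Main.v *)
Require Import Defs.
From HB Require Import structures.
From mathcomp Require Import all_boot all_order all_algebra.
From mathcomp Require Import all_classical all_reals all_analysis.
Local Open Scope classical_set_scope.
Section PX.
Variables (X : uniformType) (x0 : X).
Definition PX : Type := X.
HB.instance Definition _ := Uniform.copy PX X.
HB.instance Definition _ := isPointed.Build PX x0.

Lemma fin_cover_p (U : X -> set (X * X)) :
  compact [set: X] -> (forall z, entourage (U z)) ->
  exists zs : seq X, forall y, exists2 z, z \in zs & U z (z, y).
Proof.
move=> cX eU.
have cX' : @compact PX [set: PX] by exact: cX.
move: cX'; rewrite (@compact_cover PX) => cX'.
have [D' _ cov] : finite_subset_cover setT (fun z : PX => (@xsection PX PX (U z) z)°) setT.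
  apply: cX' => [z _|y _]; first exact: open_interior.
  exists y => //; apply: nbhs_singleton; apply: nbhs_interior.
  exact: (@nbhs_entourage X y _ (eU y)).
exists (finmap.enum_fset D') => y; have [z /= zD /interior_subset] := cov y I.
by rewrite /xsection /= inE => yz; exists z.
Qed.
End PX.

Lemma fin_cover (X : uniformType) (U : X -> set (X * X)) :
  compact [set: X] -> (forall z, entourage (U z)) ->
  exists zs : seq X, forall y, exists2 z, z \in zs & U z (z, y).
Proof.
move=> cX eU; have [[x0 _]|] := pselect (exists x : X, True).
  exact: (@fin_cover_p X x0 U cX eU).
by move=> nX; exists [::] => y; exfalso; apply: nX; exists y.
Qed.

Lemma ent4 (X : uniformType) (A : set (X * X)) : entourage A ->
  exists2 E : set (X * X), entourage E &
   (forall a b, E (a, b) -> E (b, a)) /\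
   (forall a b c d f, E (a, b) -> E (b, c) -> E (c, d) -> E (d, f) -> A (a, f)).
Proof.
move=> eA.
set B := split_ent A.
have eB : entourage B by exact: entourage_split_ent.
set C := split_ent B.
have eC : entourage C by exact: entourage_split_ent.
exists (C `&` C^-1)%relation; first exact: entourage_invI.
split; first by move=> a b [h1 h2]; split.
move=> a b c d f [h1 _] [h2 _] [h3 _] [h4 _].
apply: (entourage_split c eA).
  exact: (entourage_split b eB).
exact: (entourage_split d eB).
Qed.

Theorem theorem2p9 (T : topologicalType) (mul : T -> T -> T) (inv : T -> T)
  (e : T) (X : uniformType) (act : T -> X -> X) (S : set T) :
  is_topological_group mul inv e -> hausdorff_space T ->
  compact [set: X] -> hausdorff_space X ->
  is_flow mul e act ->
  subsemigroup mul S -> thick mul S ->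
  lyapunov_stable act S ->
  ap_flow mul act.
Proof.
move=> [mA m1 mV _ _] _ cX _ [act1 actM _] _ thS lyap alpha ealpha.
have [eta eeta [etasym eta4]] := @ent4 X alpha ealpha.
have hl : forall z, exists d, entourage d /\ forall t, S t -> forall y,
    d (z, y) -> eta (act t z, act t y).
  by move=> z; have [d ? ?] := lyap eta eeta z; exists d.
have [dl hdl] := boolp.choice hl.
have [zs hzs] := @fin_cover X dl cX (fun z => (hdl z).1).
have [ws hws] := @fin_cover X (fun _ => eta) cX (fun _ => eeta).
pose m := size zs; pose q := size ws.
pose zt := in_tuple zs; pose wt := in_tuple ws.
have wcov : forall y, exists k : 'I_q, eta (tnth wt k, y).
  move=> y; have [w wi h] := hws y.
  have iw : index w ws < q by rewrite index_mem.
  exists (Ordinal iw).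
  by rewrite (tnth_nth w) /= nth_index.
have zcov : forall y, exists j : 'I_m, dl (tnth zt j) (tnth zt j, y).
  move=> y; have [z zi h] := hzs y.
  have iz : index z zs < m by rewrite index_mem.
  exists (Ordinal iz).
  by rewrite (tnth_nth z) /= nth_index.
pose pat t (p : {ffun 'I_m -> 'I_q}) :=
  forall j, eta (tnth wt (p j), act t (tnth zt j)).
have patex : forall t, exists p, pat t p.
  move=> t; have [g hg] := boolp.choice (fun j : 'I_m => wcov (act t (tnth zt j))).
  by exists (finfun g) => j; rewrite ffunE.
have same : forall t t' p, S t -> S t' -> pat t p -> pat t' p ->
    forall x, alpha (act t x, act t' x).
  move=> t t' p St St' pt pt' x; have [j hj] := zcov x.
  apply: (eta4 _ (act t (tnth zt j)) (tnth wt (p j)) (act t' (tnth zt j))).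
  - by apply: etasym; apply: (hdl _).2.
  - exact: etasym.
  - exact: pt'.
  - exact: (hdl _).2.
pose A := [set a | forall x, alpha (x, act a x)].
have actV : forall g y, act (inv g) (act g y) = y.
  by move=> g y; rewrite -actM (mV g).1 act1.
have actV' : forall g y, act g (act (inv g) y) = y.
  by move=> g y; rewrite -actM (mV g).2 act1.
pose N := #|{: {ffun 'I_m -> 'I_q}}|.

pose good x y := A (mul (inv x) y) /\ A (mul (inv y) x).
have key : forall L : seq T, uniq L -> N < size L ->
    exists x y, [/\ x \in L, y \in L, x != y & good x y].
  move=> L uL sL.
  pose xi (i : 'I_N.+1) := nth e L i.
  pose c i := inv (xi i).
  have [u hu] := thS [set` map c (enum 'I_N.+1)]
    (finite_compact (finite_seq _)).
  have Sc : forall i, S (mul (c i) u).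
    by move=> i; apply: hu; rewrite /= map_f // mem_enum.
  have [f hf] := boolp.choice (fun i => patex (mul (c i) u)).
  have half : forall i j, f i = f j -> A (mul (inv (xi j)) (xi i)).
    move=> i j fij x.
    have := same _ _ _ (Sc i) (Sc j) (hf i) _ (act (inv u) (act (xi i) x)).
    rewrite fij => /(_ (hf j)).
    by rewrite !actM actV' actV -actM.
  have : ~~ injectiveb f.
    apply/negP => /injectiveP inj; have := @leq_card _ _ f inj.
    by rewrite card_ord ltnn.
  move=> /injectivePn [i [j nij fij]].
  have li : i < size L by apply: leq_trans sL; exact: ltn_ord.
  have lj : j < size L by apply: leq_trans sL; exact: ltn_ord.
  exists (xi i), (xi j); split.
  - exact: mem_nth.
  - exact: mem_nth.
  - by rewrite /xi nth_uniq.
  - by split; [apply: half | apply: half].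
pose bad (L : seq T) := uniq L /\
  forall x y, x \in L -> y \in L -> x != y -> ~ good x y.
have badsz : forall L, bad L -> size L <= N.
  move=> L [uL hL]; rewrite leqNgt; apply/negP => sL.
  have [x [y [xL yL nxy gxy]]] := key L uL sL.
  exact: hL x y xL yL nxy gxy.
have maxl : forall k L, bad L -> N - size L <= k ->
    exists F, bad F /\ forall s, s \notin F -> ~ bad (s :: F).
  elim=> [|k IH] L bL hk.
    exists L; split => // s sL bsL; have := badsz _ bsL.
    by move: hk; rewrite leqn0 subn_eq0 /= => hk; rewrite ltnNge hk.
  have [[s [sL bsL]]|nex] := pselect (exists s, s \notin L /\ bad (s :: L)).
    apply: (IH (s :: L)) => //; have := badsz _ bsL; move: hk => /=.
    move=> hk hs; rewrite subnS; move: hk hs; case: (N - size L) => //=.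
  exists L; split => // s sL bsL; apply: nex; exists s; split.
    exact: sL.
  exact: bsL.
have [F [[uF bF] mF]] : exists F, bad F /\ forall s, s \notin F -> ~ bad (s :: F).
  apply: (maxl N [::]); last by rewrite subn0.
  by split; [|move=> x y; rewrite in_nil].
exists A; split; last by move=> a x Aa; exact: Aa.
exists [set` map inv F]; split; first exact: finite_compact (finite_seq _).
move=> s; have [sF|sF] := boolP (s \in F).
  exists (inv s); split; first by rewrite /= map_f.
  by move=> x; rewrite (mV s).1 act1; exact: entourage_refl.
apply: boolp.contrapT => hno; apply: (mF s sF); split.
  by rewrite /= sF uF.
move=> x y; rewrite !in_cons => /orP [/eqP xs|xF] /orP [/eqP ys|yF] nxy [g1 g2].
- by move: nxy; rewrite xs ys eqxx.
- apply: hno; exists (inv y); split; first by rewrite /= map_f.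
  by rewrite -xs; exact: g2.
- apply: hno; exists (inv x); split; first by rewrite /= map_f.
  by rewrite -ys; exact: g1.
- exact: (bF x y xF yF nxy (conj g1 g2)).
Qed.
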